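(* Let ${\bf R}=(R_1,\dots,R_d)\in\mathbb R_+^d$, $p=\max\{\frac12,R_1,\dots,R_d\}$, $g({\bf R})=\frac{1}{1/R_1+\cdots+1/R_d}$, $b_{\bf R}=\big(\sum_{j=1}^d(1/2)^{2R_j}\big)^{1/(2p)}$, and for $m\in\mathbb N$ let $C(m,{\bf R},d)=\#\{{\bf k}\in\mathbb Z^d:\sum_{j=1}^d|k_j|^{2R_j}\le m^{2p}\}$. Then for every $m\in\mathbb N$, $$\big((m-b_{\bf R})_+\big)^{p/g({\bf R})}\mathrm{vol}(B^d_{2{\bf R}})\le C(m,{\bf R},d)\le (m+b_{\bf R})^{p/g({\bf R})}\mathrm{vol}(B^d_{2{\bf R}}),$$ where $a_+=\max\{a,0\}$.
   Context: $B^d_{2{\bf R}}=\{{\bf x}\in\mathbb R^d:\sum_{j=1}^d|x_j|^{2R_j}\le1\}$ and vol is Lebesgue measure on $\mathbb R^d$. *)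

(* Defs.v *)
From Stdlib Require Import Reals Lra List ZArith.
Open Scope R_scope.

Fixpoint sumd (d : nat) (f : nat -> R) : R :=
  match d with O => 0 | S n => sumd n f + f n end.
Fixpoint prodd (d : nat) (f : nat -> R) : R :=
  match d with O => 1 | S n => prodd n f * f n end.
Fixpoint maxd (d : nat) (f : nat -> R) : R :=
  match d with O => / 2 | S n => Rmax (maxd n f) (f n) end.

(* real power x^y for x >= 0, with the convention 0^y = 0 (y > 0) *)
Definition rpow (x y : R) : R :=
  if Req_EM_T x 0 then 0 else Rpower x y.

(* points of R^d are functions nat -> R, only coordinates 0..d-1 matter *)
Definition in_box (d : nat) (a b x : nat -> R) : Prop :=
  forall j, (j < d)%nat -> a j <= x j <= b j.
Definition box_vol (d : nat) (a b : nat -> R) : R :=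
  prodd d (fun j => b j - a j).

Definition cover_sum (d : nat) (A : (nat -> R) -> Prop) (s : R) : Prop :=
  exists a b : nat -> nat -> R,
    (forall n j, (j < d)%nat -> a n j <= b n j) /\
    (forall x, A x -> exists n, in_box d (a n) (b n) x) /\
    infinite_sum (fun n => box_vol d (a n) (b n)) s.

(* v is the Lebesgue (outer) measure of A in R^d: the infimum of cover sums *)
Definition lebesgue_measure (d : nat) (A : (nat -> R) -> Prop) (v : R) : Prop :=
  (forall s, cover_sum d A s -> v <= s) /\
  (forall w, (forall s, cover_sum d A s -> w <= s) -> w <= v).

Definition ball2R (d : nat) (Rv : nat -> R) (x : nat -> R) : Prop :=
  sumd d (fun j => rpow (Rabs (x j)) (2 * Rv j)) <= 1.

Definition pR (d : nat) (Rv : nat -> R) : R := maxd d Rv.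
Definition gR (d : nat) (Rv : nat -> R) : R := / sumd d (fun j => / Rv j).
Definition bR (d : nat) (Rv : nat -> R) : R :=
  rpow (sumd d (fun j => rpow (/ 2) (2 * Rv j))) (/ (2 * pR d Rv)).

Definition latset (d : nat) (Rv : nat -> R) (m : nat) (k : list Z) : Prop :=
  length k = d /\
  sumd d (fun j => rpow (Rabs (IZR (nth j k 0%Z))) (2 * Rv j))
    <= rpow (INR m) (2 * pR d Rv).

Definition has_card (P : list Z -> Prop) (n : nat) : Prop :=
  exists l : list (list Z), NoDup l /\ length l = n /\ forall k, In k l <-> P k.

(* Main.v *)
Require Import Defs.
From Stdlib Require Import Reals Lra Lia List ZArith ClassicalEpsilon Classical.
Open Scope R_scope.


Lemma rpow_0 y : rpow 0 y = 0.
Proof. unfold rpow; destruct (Req_EM_T 0 0); lra. Qed.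

Lemma rpow_pos x y : 0 < x -> rpow x y = Rpower x y.
Proof. intro H; unfold rpow; destruct (Req_EM_T x 0); [lra|auto]. Qed.

Lemma rpow_gt0 x y : 0 < x -> 0 < rpow x y.
Proof. intro H; rewrite rpow_pos by lra; unfold Rpower; apply exp_pos. Qed.

Lemma rpow_ge0 x y : 0 <= x -> 0 <= rpow x y.
Proof. intro H; destruct (Req_dec x 0) as [->|]; [rewrite rpow_0; lra|].
  apply Rlt_le, rpow_gt0; lra. Qed.

Lemma rpow_1 x : 0 <= x -> rpow x 1 = x.
Proof. intro H; destruct (Req_dec x 0) as [->|]; [apply rpow_0|].
  rewrite rpow_pos by lra; apply Rpower_1; lra. Qed.



Lemma rpow_mul x y z : 0 <= x -> 0 <= y -> rpow (x * y) z = rpow x z * rpow y z.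
Proof. intros Hx Hy.
  destruct (Req_dec x 0) as [->|]; [rewrite Rmult_0_l, !rpow_0; lra|].
  destruct (Req_dec y 0) as [->|]; [rewrite Rmult_0_r, !rpow_0; lra|].
  rewrite !rpow_pos by (try apply Rmult_lt_0_compat; lra).
  rewrite Rpower_mult_distr; auto; lra. Qed.

Lemma rpow_rpow x y z : 0 <= x -> rpow (rpow x y) z = rpow x (y * z).
Proof. intros Hx.
  destruct (Req_dec x 0) as [->|]; [rewrite !rpow_0; lra|].
  rewrite (rpow_pos x y) by lra. rewrite rpow_pos by (unfold Rpower; apply exp_pos).
  rewrite rpow_pos by lra. apply Rpower_mult. Qed.

Lemma rpow_plus x y z : 0 < x -> rpow x (y + z) = rpow x y * rpow x z.
Proof. intros; rewrite !rpow_pos by lra; apply Rpower_plus. Qed.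

Lemma rpow_le x y z : 0 < z -> 0 <= x <= y -> rpow x z <= rpow y z.
Proof. intros Hz [Hx Hxy].
  destruct (Req_dec x 0) as [->|]; [rewrite rpow_0; apply rpow_ge0; lra|].
  rewrite !rpow_pos by lra. apply Rle_Rpower_l; lra. Qed.

Lemma rpow_lt x y z : 0 < z -> 0 <= x < y -> rpow x z < rpow y z.
Proof. intros Hz [Hx Hxy].
  destruct (Req_dec x 0) as [->|]; [rewrite rpow_0; apply rpow_gt0; lra|].
  rewrite !rpow_pos by lra. apply Rlt_Rpower_l; lra. Qed.

Lemma rpow_le_inv x y z : 0 < z -> 0 <= x -> 0 <= y -> rpow x z <= rpow y z -> x <= y.
Proof. intros Hz Hx Hy H. destruct (Rle_lt_dec x y); auto.
  assert (rpow y z < rpow x z) by (apply rpow_lt; lra). lra. Qed.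

Lemma rpow_inv_le x y z : 0 < z -> 0 <= x -> 0 <= y ->
  (rpow x z <= y <-> x <= rpow y (/ z)).
Proof. intros Hz Hx Hy; split; intro H.
  - apply (rpow_le_inv _ _ z); auto. apply rpow_ge0; auto.
    rewrite rpow_rpow by auto. rewrite Rinv_l by lra. rewrite rpow_1 by auto. auto.
  - assert (E: rpow (rpow y (/ z)) z = y).
    { rewrite rpow_rpow by auto. rewrite Rinv_l by lra. apply rpow_1; auto. }
    rewrite <- E. apply rpow_le; auto. Qed.

Lemma rpow_exp_anti x a b : 0 < x <= 1 -> a <= b -> rpow x b <= rpow x a.
Proof. intros Hx Hab. rewrite !rpow_pos by lra. unfold Rpower.
  assert (ln x <= 0).
  { destruct (Req_dec x 1) as [->|]; [rewrite ln_1; lra|].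
    left; rewrite <- ln_1; apply ln_increasing; lra. }
  assert (b * ln x <= a * ln x) by nra.
  destruct H0 as [H0|H0]; [left; apply exp_increasing; auto | rewrite H0; lra]. Qed.

Lemma rpow_exp_mono x a b : 1 <= x -> a <= b -> rpow x a <= rpow x b.
Proof. intros Hx Hab. rewrite !rpow_pos by lra. apply Rle_Rpower; auto. Qed.

Lemma amgm v s : 0 < v -> 0 <= s <= 1 -> rpow v s <= s * v + (1 - s).
Proof. intros Hv Hs. rewrite rpow_pos by lra. unfold Rpower.
  set (L := ln v). set (z := s * L).
  assert (H1: exp L >= exp z * (1 + L - z)).
  { replace L with (z + (L - z)) at 1 by ring. rewrite exp_plus.
    pose proof (exp_ineq1_le (L - z)). pose proof (exp_pos z). nra. }
  assert (H2: exp 0 >= exp z * (1 + 0 - z)).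
  { replace 0 with (z + (0 - z)) at 1 by ring. rewrite exp_plus.
    pose proof (exp_ineq1_le (0 - z)). pose proof (exp_pos z). nra. }
  rewrite exp_0 in H2. unfold L in H1; rewrite exp_ln in H1 by lra. fold L in H1.
  assert (s * (exp z * (1 + L - z)) + (1 - s) * (exp z * (1 + 0 - z)) = exp z)
    by (unfold z; ring).
  nra. Qed.

Lemma bernoulli u r : 0 < u -> 1 <= r -> 1 + r * (u - 1) <= rpow u r.
Proof. intros Hu Hr. set (v := rpow u r). assert (Hv: 0 < v) by (apply rpow_gt0; lra).
  assert (Hs: 0 <= / r <= 1). { split. left; apply Rinv_0_lt_compat; lra.
    rewrite <- Rinv_1. apply Rinv_le_contravar; lra. }
  pose proof (amgm v (/ r) Hv Hs). unfold v in H. rewrite rpow_rpow in H by lra.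
  rewrite Rinv_r in H by lra. rewrite rpow_1 in H by lra. fold v in H.
  assert (r * u <= r * (/ r * v + (1 - / r))) by (apply Rmult_le_compat_l; lra).
  replace (r * (/ r * v + (1 - / r))) with (v + r - 1) in H0 by (field; lra). lra. Qed.

Lemma tangent t z r : 0 <= t -> 0 < z -> 1 <= r ->
  rpow z r + r * rpow z (r - 1) * (t - z) <= rpow t r.
Proof. intros Ht Hz Hr.
  assert (Ezr: rpow z r = rpow z (r - 1) * z).
  { replace r with ((r - 1) + 1) at 1 by ring. rewrite rpow_plus by lra.
    rewrite rpow_1 by lra. auto. }
  pose proof (rpow_gt0 z (r-1) Hz) as Hp.
  destruct (Req_dec t 0) as [->|Ht0].
  - rewrite rpow_0. rewrite Ezr.
    assert (0 <= rpow z (r - 1) * z * (r - 1)) by (apply Rmult_le_pos; [nra|lra]). nra.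
  - pose proof (bernoulli (t / z) r) as B.
    assert (0 < t / z) by (apply Rdiv_lt_0_compat; lra).
    specialize (B H Hr). unfold Rdiv in B. rewrite rpow_mul in B by (try left; try apply Rinv_0_lt_compat; lra).
    assert (rpow (/ z) r * rpow z r = 1).
    { rewrite <- rpow_mul by (left; try apply Rinv_0_lt_compat; lra).
      rewrite Rinv_l by lra. rewrite rpow_pos by lra. unfold Rpower. rewrite ln_1. rewrite Rmult_0_r. apply exp_0. }
    assert (Hzr: 0 < rpow z r) by (apply rpow_gt0; lra).
    assert ((1 + r * (t * / z - 1)) * rpow z r <= rpow t r * rpow (/ z) r * rpow z r)
      by (apply Rmult_le_compat_r; lra).
    rewrite Rmult_assoc, H0, Rmult_1_r in H1.
    replace ((1 + r * (t * / z - 1)) * rpow z r) with (rpow z r + r * rpow z (r - 1) * (t - z)) in H1; auto.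
    rewrite Ezr. field. lra. Qed.

Lemma convex_pow x y l r : 0 <= x -> 0 <= y -> 0 <= l <= 1 -> 1 <= r ->
  rpow (l * x + (1 - l) * y) r <= l * rpow x r + (1 - l) * rpow y r.
Proof. intros Hx Hy Hl Hr. set (z := l * x + (1 - l) * y).
  pose proof (rpow_ge0 x r Hx). pose proof (rpow_ge0 y r Hy).
  destruct (Req_dec z 0) as [E|E].
  - rewrite E, rpow_0. nra.
  - assert (Hz: 0 < z) by (unfold z in *; nra).
    pose proof (tangent x z r Hx Hz Hr). pose proof (tangent y z r Hy Hz Hr).
    set (K := r * rpow z (r - 1)) in *.
    assert (l * (rpow z r + K * (x - z)) + (1 - l) * (rpow z r + K * (y - z)) = rpow z r)
      by (unfold z; ring).
    nra. Qed.


Lemma Rdiv_le_0_compat a b : 0 <= a -> 0 < b -> 0 <= a / b.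
Proof. intros; unfold Rdiv; apply Rmult_le_pos; auto; left; apply Rinv_0_lt_compat; auto. Qed.

Lemma sumd_ext d f g : (forall j, (j < d)%nat -> f j = g j) -> sumd d f = sumd d g.
Proof. induction d; simpl; intros; auto. rewrite IHd by (intros; apply H; lia). rewrite H by lia; auto. Qed.
Lemma sumd_le d f g : (forall j, (j < d)%nat -> f j <= g j) -> sumd d f <= sumd d g.
Proof. induction d; simpl; intros; [lra|]. assert (sumd d f <= sumd d g) by (apply IHd; intros; apply H; lia).
  assert (f d <= g d) by (apply H; lia). lra. Qed.
Lemma sumd_nonneg d f : (forall j, (j < d)%nat -> 0 <= f j) -> 0 <= sumd d f.
Proof. intros. replace 0 with (sumd d (fun _ => 0)). apply sumd_le; auto.
  induction d; simpl; auto. rewrite IHd; [ring| intros; apply H; lia]. Qed.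
Lemma sumd_scal d c f : sumd d (fun j => c * f j) = c * sumd d f.
Proof. induction d; simpl; [ring|]. rewrite IHd; ring. Qed.
Lemma sumd_plus d f g : sumd d (fun j => f j + g j) = sumd d f + sumd d g.
Proof. induction d; simpl; [ring|]. rewrite IHd; ring. Qed.
Lemma sumd_term_le d f k : (forall j, (j < d)%nat -> 0 <= f j) -> (k < d)%nat -> f k <= sumd d f.
Proof. induction d; simpl; intros; [lia|]. assert (0 <= sumd d f) by (apply sumd_nonneg; intros; apply H; lia).
  destruct (Nat.eq_dec k d) as [->|]. lra. assert (f k <= sumd d f) by (apply IHd; intros; try apply H; lia).
  assert (0 <= f d) by (apply H; lia). lra. Qed.

Lemma rpow_1l r : rpow 1 r = 1.
Proof. rewrite rpow_pos by lra. unfold Rpower. rewrite ln_1, Rmult_0_r. apply exp_0. Qed.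
Lemma rpow_inv y r : 0 < y -> rpow (/ y) r = / rpow y r.
Proof. intros. assert (rpow (/ y) r * rpow y r = 1).
  { rewrite <- rpow_mul by (left; try apply Rinv_0_lt_compat; lra). rewrite Rinv_l by lra. apply rpow_1l. }
  pose proof (rpow_gt0 y r H). apply Rmult_eq_reg_r with (rpow y r); [rewrite H0, Rinv_l; lra | lra]. Qed.
Lemma rpow_div x y r : 0 <= x -> 0 < y -> rpow (x / y) r = rpow x r / rpow y r.
Proof. intros. unfold Rdiv. rewrite rpow_mul by (try assumption; left; apply Rinv_0_lt_compat; lra).
  rewrite rpow_inv; auto. Qed.
Lemma rpow_eq0 x r : 0 <= x -> rpow x r = 0 -> x = 0.
Proof. intros. destruct (Req_dec x 0); auto. pose proof (rpow_gt0 x r). lra. Qed.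

Lemma sumd_zero d f : (forall j, (j < d)%nat -> 0 <= f j) -> sumd d f = 0 -> forall j, (j < d)%nat -> f j = 0.
Proof. intros. pose proof (sumd_term_le d f j H H1). pose proof (H j H1). lra. Qed.

Lemma minkowski d r A B : 1 <= r -> (forall j, (j < d)%nat -> 0 <= A j) -> (forall j, (j < d)%nat -> 0 <= B j) ->
  rpow (sumd d (fun j => rpow (A j + B j) r)) (/ r) <=
  rpow (sumd d (fun j => rpow (A j) r)) (/ r) + rpow (sumd d (fun j => rpow (B j) r)) (/ r).
Proof. intros Hr HA HB.
  assert (Hr0: 0 < / r) by (apply Rinv_0_lt_compat; lra).
  set (TA := sumd d (fun j => rpow (A j) r)). set (TB := sumd d (fun j => rpow (B j) r)).
  assert (TA0: 0 <= TA) by (apply sumd_nonneg; intros; apply rpow_ge0; auto).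
  assert (TB0: 0 <= TB) by (apply sumd_nonneg; intros; apply rpow_ge0; auto).
  set (SA := rpow TA (/ r)). set (SB := rpow TB (/ r)).
  assert (SA0: 0 <= SA) by (apply rpow_ge0; auto). assert (SB0: 0 <= SB) by (apply rpow_ge0; auto).
  assert (ETA: rpow SA r = TA). { unfold SA. rewrite rpow_rpow by auto. rewrite Rinv_l by lra. apply rpow_1; auto. }
  assert (ETB: rpow SB r = TB). { unfold SB. rewrite rpow_rpow by auto. rewrite Rinv_l by lra. apply rpow_1; auto. }
  destruct (Req_dec SA 0) as [ZA|ZA].
  { assert (TA = 0) by (apply (rpow_eq0 _ (/ r)); auto).
    assert (forall j, (j < d)%nat -> A j = 0).
    { intros. apply (rpow_eq0 _ r); auto. apply (sumd_zero d (fun j => rpow (A j) r)); auto.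
      intros; apply rpow_ge0; auto. }
    rewrite ZA, Rplus_0_l. right. unfold SB, TB. f_equal. apply sumd_ext. intros. rewrite H0 by auto. f_equal; ring. }
  destruct (Req_dec SB 0) as [ZB|ZB].
  { assert (TB = 0) by (apply (rpow_eq0 _ (/ r)); auto).
    assert (forall j, (j < d)%nat -> B j = 0).
    { intros. apply (rpow_eq0 _ r); auto. apply (sumd_zero d (fun j => rpow (B j) r)); auto.
      intros; apply rpow_ge0; auto. }
    rewrite ZB, Rplus_0_r. right. unfold SA, TA. f_equal. apply sumd_ext. intros. rewrite H0 by auto. f_equal; ring. }
  set (S := SA + SB). assert (HS: 0 < S) by (unfold S; lra).
  set (l := SA / S).
  assert (Hl: 0 <= l <= 1). { unfold l; split. apply Rdiv_le_0_compat; lra.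
    apply Rmult_le_reg_r with S; auto. unfold Rdiv; rewrite Rmult_assoc, Rinv_l by lra. unfold S; lra. }
  assert (Hj: forall j, (j < d)%nat -> rpow (A j + B j) r / rpow S r <=
     l * (rpow (A j) r / TA) + (1 - l) * (rpow (B j) r / TB)).
  { intros j Hj. rewrite <- rpow_div by (auto; specialize (HA j Hj); specialize (HB j Hj); lra).
    rewrite <- ETA, <- ETB. rewrite <- !rpow_div by (auto; lra).
    replace ((A j + B j) / S) with (l * (A j / SA) + (1 - l) * (B j / SB)).
    apply convex_pow; auto; try apply Rdiv_le_0_compat; auto; lra.
    unfold l, S. field. lra. }
  assert (Hsum: sumd d (fun j => rpow (A j + B j) r / rpow S r) <= 1).
  { eapply Rle_trans. apply sumd_le. apply Hj. rewrite sumd_plus.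
    unfold Rdiv. rewrite (sumd_scal d l), (sumd_scal d (1 - l)).
    rewrite (sumd_ext d (fun j => rpow (A j) r * / TA) (fun j => / TA * rpow (A j) r)) by (intros; ring).
    rewrite (sumd_ext d (fun j => rpow (B j) r * / TB) (fun j => / TB * rpow (B j) r)) by (intros; ring).
    rewrite !sumd_scal. fold TA TB.
    assert (TA <> 0) by (intro E; apply ZA; unfold SA; rewrite E; apply rpow_0).
    assert (TB <> 0) by (intro E; apply ZB; unfold SB; rewrite E; apply rpow_0).
    rewrite !Rinv_l by auto. lra. }
  assert (HSr: 0 < rpow S r) by (apply rpow_gt0; auto).
  unfold Rdiv in Hsum. rewrite (sumd_ext d _ (fun j => / rpow S r * rpow (A j + B j) r)) in Hsum by (intros; ring).
  rewrite sumd_scal in Hsum.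
  assert (sumd d (fun j => rpow (A j + B j) r) <= rpow S r).
  { apply Rmult_le_reg_l with (/ rpow S r). apply Rinv_0_lt_compat; auto. rewrite Rinv_l by lra. lra. }
  fold S. apply (rpow_inv_le _ _ (/ r)); auto.
  apply sumd_nonneg; intros; apply rpow_ge0; specialize (HA j H0); specialize (HB j H0); lra.
  lra. rewrite Rinv_inv. auto.
Qed.


Lemma rpow_ge_self x a : 0 <= x <= 1 -> 0 < a <= 1 -> x <= rpow x a.
Proof. intros Hx Ha. destruct (Req_dec x 0) as [->|]; [rewrite rpow_0; lra|].
  rewrite <- (rpow_1 x) at 1 by lra. apply rpow_exp_anti; lra. Qed.

Lemma subadd a b al : 0 <= a -> 0 <= b -> 0 < al <= 1 -> rpow (a + b) al <= rpow a al + rpow b al.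
Proof. intros Ha Hb Hal. destruct (Req_dec (a + b) 0) as [E|E].
  { assert (a = 0) by lra. assert (b = 0) by lra. subst. rewrite Rplus_0_l, !rpow_0; lra. }
  assert (Hs: 0 < a + b) by lra.
  assert (K: forall c, 0 <= c <= a + b -> rpow (a + b) al * (c / (a + b)) <= rpow c al).
  { intros c Hc. replace c with ((a + b) * (c / (a + b))) at 2 by (field; lra).
    rewrite rpow_mul by (try apply Rdiv_le_0_compat; lra).
    apply Rmult_le_compat_l. apply rpow_ge0; lra. apply rpow_ge_self; auto.
    split. apply Rdiv_le_0_compat; lra. apply Rmult_le_reg_r with (a + b); auto.
    unfold Rdiv; rewrite Rmult_assoc, Rinv_l; lra. }
  pose proof (K a ltac:(lra)). pose proof (K b ltac:(lra)).
  assert (rpow (a + b) al * (a / (a + b)) + rpow (a + b) al * (b / (a + b)) = rpow (a + b) al) by (field; lra).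
  lra. Qed.

Lemma maxd_ge d f : / 2 <= maxd d f /\ forall j, (j < d)%nat -> f j <= maxd d f.
Proof. induction d; simpl. split; [lra | intros; lia].
  destruct IHd as [H1 H2]. split. eapply Rle_trans; [apply H1| apply Rmax_l].
  intros j Hj. destruct (Nat.eq_dec j d) as [->|]. apply Rmax_r.
  eapply Rle_trans; [apply H2; lia| apply Rmax_l]. Qed.

Definition Phi (d : nat) (Rv : nat -> R) (y : nat -> R) : R :=
  sumd d (fun j => rpow (Rabs (y j)) (2 * Rv j)).
Definition nrm (d : nat) (Rv : nat -> R) (y : nat -> R) : R :=
  rpow (Phi d Rv y) (/ (2 * pR d Rv)).

Lemma Phi_ge0 d Rv y : 0 <= Phi d Rv y.
Proof. apply sumd_nonneg; intros; apply rpow_ge0; apply Rabs_pos. Qed.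

Lemma pR_ge d Rv : / 2 <= pR d Rv.
Proof. apply maxd_ge. Qed.

Lemma triangle d Rv y z : (forall j, (j < d)%nat -> 0 < Rv j) ->
  nrm d Rv (fun j => y j + z j) <= nrm d Rv y + nrm d Rv z.
Proof. intros HR. unfold nrm, Phi. set (P := pR d Rv). set (r := 2 * P).
  assert (HP: / 2 <= P) by apply pR_ge. assert (Hr: 1 <= r) by (unfold r; lra).
  assert (Hr0 : 0 < / r) by (apply Rinv_0_lt_compat; lra).
  set (al := fun j => 2 * Rv j / r).
  assert (Hal: forall j, (j < d)%nat -> 0 < al j <= 1).
  { intros j Hj. unfold al. specialize (HR j Hj). pose proof (proj2 (maxd_ge d Rv) j Hj). fold P in H.
    split. apply Rdiv_lt_0_compat; lra. apply Rmult_le_reg_r with r; [lra|].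
    unfold Rdiv; rewrite Rmult_assoc, Rinv_l; unfold r, P, pR in *; lra. }
  assert (Ear: forall j, al j * r = 2 * Rv j). { intros; unfold al; field; unfold r in *; lra. }
  set (A := fun j => rpow (Rabs (y j)) (al j)). set (B := fun j => rpow (Rabs (z j)) (al j)).
  assert (EA: forall j, rpow (Rabs (y j)) (2 * Rv j) = rpow (A j) r).
  { intros; unfold A; rewrite rpow_rpow by apply Rabs_pos; rewrite Ear; auto. }
  assert (EB: forall j, rpow (Rabs (z j)) (2 * Rv j) = rpow (B j) r).
  { intros; unfold B; rewrite rpow_rpow by apply Rabs_pos; rewrite Ear; auto. }
  rewrite (sumd_ext d (fun j => rpow (Rabs (y j)) (2 * Rv j)) (fun j => rpow (A j) r)) by auto.
  rewrite (sumd_ext d (fun j => rpow (Rabs (z j)) (2 * Rv j)) (fun j => rpow (B j) r)) by auto.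
  eapply Rle_trans; [| apply minkowski; auto; intros; unfold A, B; apply rpow_ge0, Rabs_pos].
  apply rpow_le; auto. split. apply sumd_nonneg; intros; apply rpow_ge0, Rabs_pos.
  apply sumd_le. intros j Hj. rewrite <- Ear. rewrite <- rpow_rpow by apply Rabs_pos.
  apply rpow_le; [lra|]. split. apply rpow_ge0, Rabs_pos.
  eapply Rle_trans; [| apply subadd; auto; apply Rabs_pos].
  apply rpow_le. apply Hal; auto. split. apply Rabs_pos. apply Rabs_triang. Qed.


Lemma Phi_ext d Rv y z : (forall j, (j < d)%nat -> y j = z j) -> Phi d Rv y = Phi d Rv z.
Proof. intros; unfold Phi; apply sumd_ext; intros; rewrite H; auto. Qed.
Lemma nrm_ext d Rv y z : (forall j, (j < d)%nat -> y j = z j) -> nrm d Rv y = nrm d Rv z.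
Proof. intros; unfold nrm; rewrite (Phi_ext d Rv y z); auto. Qed.
Lemma nrm_ge0 d Rv y : 0 <= nrm d Rv y.
Proof. apply rpow_ge0, Phi_ge0. Qed.

Lemma nrm_le_iff d Rv y c : 0 <= c -> (nrm d Rv y <= c <-> Phi d Rv y <= rpow c (2 * pR d Rv)).
Proof. intros Hc. pose proof (pR_ge d Rv). unfold nrm.
  rewrite rpow_inv_le; try apply Phi_ge0; auto. rewrite Rinv_inv. tauto.
  apply Rinv_0_lt_compat; lra. Qed.

Lemma nrm_half d Rv e : (forall j, (j < d)%nat -> 0 < Rv j) -> (forall j, (j < d)%nat -> Rabs (e j) <= / 2) ->
  nrm d Rv e <= bR d Rv.
Proof. intros HR He. pose proof (pR_ge d Rv). unfold nrm, bR. apply rpow_le. apply Rinv_0_lt_compat; lra.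
  split. apply Phi_ge0. apply sumd_le. intros j Hj. apply rpow_le. specialize (HR j Hj); lra.
  split. apply Rabs_pos. auto. Qed.

Lemma bR_ge0 d Rv : 0 <= bR d Rv.
Proof. unfold bR. apply rpow_ge0. apply sumd_nonneg. intros; apply rpow_ge0; lra. Qed.

Lemma nrm_near d Rv y k : (forall j, (j < d)%nat -> 0 < Rv j) -> (forall j, (j < d)%nat -> Rabs (y j - k j) <= / 2) ->
  nrm d Rv y <= nrm d Rv k + bR d Rv.
Proof. intros HR H. rewrite (nrm_ext d Rv y (fun j => k j + (y j - k j))) by (intros; ring).
  eapply Rle_trans. apply triangle; auto. pose proof (nrm_half d Rv (fun j => y j - k j) HR H). lra. Qed.

Lemma nrm_scale d Rv x mu : (forall j, (j < d)%nat -> 0 < Rv j) -> 0 < mu ->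
  nrm d Rv (fun j => rpow mu (pR d Rv / Rv j) * x j) = mu * nrm d Rv x.
Proof. intros HR Hmu. pose proof (pR_ge d Rv). set (P := pR d Rv) in *. unfold nrm. fold P.
  assert (Phi d Rv (fun j => rpow mu (P / Rv j) * x j) = rpow mu (2 * P) * Phi d Rv x).
  { unfold Phi. rewrite <- sumd_scal. apply sumd_ext. intros j Hj.
    rewrite Rabs_mult. rewrite (Rabs_right (rpow _ _)) by (apply Rle_ge, rpow_ge0; lra).
    rewrite rpow_mul by (try apply rpow_ge0; try apply Rabs_pos; lra). f_equal.
    rewrite rpow_rpow by lra. f_equal. specialize (HR j Hj). field. lra. }
  rewrite H0. rewrite rpow_mul by (try apply rpow_ge0; try apply Phi_ge0; lra).
  f_equal. rewrite rpow_rpow by lra. replace (2 * P * / (2 * P)) with 1 by (field; lra). apply rpow_1; lra. Qed.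


Definition in_obox (d : nat) (c e x : nat -> R) : Prop :=
  forall j, (j < d)%nat -> c j < x j < e j.

Lemma list_max_bound (l : list R) (g : R -> nat) : exists M, forall s, In s l -> (g s <= M)%nat.
Proof. induction l as [|s0 l IH]. exists 0%nat; intros s []. destruct IH as [M HM].
  exists (Nat.max M (g s0)). intros s [->|Hs]. lia. specialize (HM s Hs). lia. Qed.

Lemma delta_lemma (c e : nat -> nat -> R) (act : nat -> Prop) d s N :
  exists dl, 0 < dl /\ forall n, (n < N)%nat -> (act n /\ c n d < s < e n d) ->
     forall s', Rabs (s' - s) < dl -> c n d < s' < e n d.
Proof. induction N. exists 1; split; [lra| intros; lia].
  destruct IHN as [dl [Hdl H]].
  destruct (classic (act N /\ c N d < s < e N d)) as [HN|HN].
  - exists (Rmin dl (Rmin (s - c N d) (e N d - s))). split.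
    { apply Rmin_pos; auto. apply Rmin_pos; lra. }
    intros n Hn Ha s' Hs'. pose proof (Rmin_l dl (Rmin (s - c N d) (e N d - s))).
    pose proof (Rmin_r dl (Rmin (s - c N d) (e N d - s))).
    pose proof (Rmin_l (s - c N d) (e N d - s)). pose proof (Rmin_r (s - c N d) (e N d - s)).
    destruct (Nat.eq_dec n N) as [->|]. apply Rabs_def2 in Hs'. lra.
    apply (H n); auto; try lia. lra.
  - exists dl; split; auto. intros n Hn Ha. destruct (Nat.eq_dec n N) as [->|]. tauto.
    apply H; auto; lia. Qed.

Lemma box_compact : forall d (a b : nat -> R) (c e : nat -> nat -> R) (act : nat -> Prop),
  (forall x, in_box d a b x -> exists n, act n /\ in_obox d (c n) (e n) x) ->
  exists N, forall x, in_box d a b x -> exists n, (n < N)%nat /\ act n /\ in_obox d (c n) (e n) x.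
Proof.
  induction d; intros a b c e act H.
  { destruct (H (fun _ => 0)) as [n0 [Ha _]]. intros j Hj; lia.
    exists (S n0). intros x _. exists n0. split; [lia|]. split; auto. intros j Hj; lia. }
  set (PP := fun s dl N => forall x, in_box (S d) a b x -> Rabs (x d - s) < dl ->
       exists n, (n < N)%nat /\ act n /\ in_obox (S d) (c n) (e n) x).
  assert (Claim3: forall s, a d <= s <= b d -> exists dl N, 0 < dl /\ PP s dl N).
  { intros s Hs.
    set (acts := fun n => act n /\ c n d < s < e n d).
    set (upd := fun (x : nat -> R) => fun j => if Nat.eq_dec j d then s else x j).
    destruct (IHd a b c e acts) as [N HN].
    { intros x Hx. destruct (H (upd x)) as [n [Hn1 Hn2]].
      { intros j Hj. unfold upd. destruct (Nat.eq_dec j d). subst; lra. apply Hx. lia. }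
      exists n. split. split; auto. specialize (Hn2 d ltac:(lia)). unfold upd in Hn2.
      destruct (Nat.eq_dec d d); [auto|congruence].
      intros j Hj. specialize (Hn2 j ltac:(lia)). unfold upd in Hn2.
      destruct (Nat.eq_dec j d); [lia|auto]. }
    destruct (delta_lemma c e act d s N) as [dl [Hdl Hd]].
    exists dl, N. split; auto. intros x Hx Hxs.
    destruct (HN x) as [n [Hn [[Ha Hs2] Hin]]]. { intros j Hj; apply Hx; lia. }
    exists n. split; auto. split; auto. intros j Hj.
    destruct (Nat.eq_dec j d) as [->|]. apply (Hd n); auto. apply Hin; lia. }
  assert (Ch: forall s, exists p : R * nat, a d <= s <= b d -> 0 < fst p /\ PP s (fst p) (snd p)).
  { intros s. destruct (classic (a d <= s <= b d)) as [Hs|Hs].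
    destruct (Claim3 s Hs) as [dl [N [H1 H2]]]. exists (dl, N); auto.
    exists (1, 0%nat). tauto. }
  set (ch := fun s => proj1_sig (constructive_indefinite_description _ (Ch s))).
  assert (Hch: forall s, a d <= s <= b d -> 0 < fst (ch s) /\ PP s (fst (ch s)) (snd (ch s))).
  { intros s Hs. unfold ch. destruct (constructive_indefinite_description _ (Ch s)); simpl; auto. }
  set (F := fun s y => (a d <= s <= b d) /\ Rabs (y - s) < fst (ch s)).
  assert (cf: forall s, (exists y, F s y) -> (fun s => a d <= s <= b d) s).
  { intros s [y [Hy _]]; auto. }
  set (fam := mkfamily (fun s => a d <= s <= b d) F cf).
  destruct (compact_P3 (a d) (b d) fam) as [D [Hcov [l Hl]]].
  { split.
    - intros y Hy. exists y. simpl. unfold F. split; auto. rewrite Rminus_diag, Rabs_R0. apply Hch; auto.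
    - intros s y Hy. simpl in Hy. destruct Hy as [Hs Hys].
      assert (0 < fst (ch s) - Rabs (y - s)) by lra.
      exists (mkposreal _ H0). intros y' Hy'. unfold disc in Hy'. simpl in Hy'. simpl. split; auto.
      pose proof (Rabs_triang (y' - y) (y - s)). replace (y' - y + (y - s)) with (y' - s) in H1 by ring. lra. }
  destruct (list_max_bound l (fun s => snd (ch s))) as [M HM].
  exists M. intros x Hx.
  destruct (Hcov (x d)) as [s [HF HDs]]. { apply Hx; lia. }
  simpl in HF, HDs. destruct HF as [Hs Hxs].
  assert (In s l) by (apply Hl; split; auto).
  destruct (Hch s Hs) as [_ Hpp]. destruct (Hpp x Hx Hxs) as [n [Hn Hrest]].
  exists n. split; auto. specialize (HM s H0). simpl in HM. lia.
Qed.


Definition sumL {A} (l : list A) (f : A -> R) : R := fold_right (fun x acc => f x + acc) 0 l.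
Definition ind (P : Prop) : R := if excluded_middle_informative P then 1 else 0.

Lemma ind_1 (P : Prop) : P -> ind P = 1.
Proof. unfold ind; destruct (excluded_middle_informative P); tauto. Qed.
Lemma ind_0 (P : Prop) : ~ P -> ind P = 0.
Proof. unfold ind; destruct (excluded_middle_informative P); tauto. Qed.
Lemma ind_ge0 P : 0 <= ind P.
Proof. unfold ind; destruct (excluded_middle_informative P); lra. Qed.
Lemma ind_le1 P : ind P <= 1.
Proof. unfold ind; destruct (excluded_middle_informative P); lra. Qed.
Lemma ind_ext (P Q : Prop) : (P <-> Q) -> ind P = ind Q.
Proof. intros. destruct (excluded_middle_informative P). rewrite !ind_1; tauto. rewrite !ind_0; tauto. Qed.

Lemma sumL_app {A} (l1 l2 : list A) f : sumL (l1 ++ l2) f = sumL l1 f + sumL l2 f.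
Proof. induction l1; simpl; [ring|]. rewrite IHl1; ring. Qed.
Lemma sumL_le {A} (l : list A) f g : (forall x, In x l -> f x <= g x) -> sumL l f <= sumL l g.
Proof. induction l; simpl; intros; [lra|]. assert (f a <= g a) by auto. assert (sumL l f <= sumL l g) by auto. lra. Qed.
Lemma sumL_ext {A} (l : list A) f g : (forall x, In x l -> f x = g x) -> sumL l f = sumL l g.
Proof. induction l; simpl; intros; auto. rewrite H, IHl; auto. Qed.
Lemma sumL_nonneg {A} (l : list A) f : (forall x, In x l -> 0 <= f x) -> 0 <= sumL l f.
Proof. induction l; simpl; intros; [lra|]. assert (0 <= f a) by auto. assert (0 <= sumL l f) by auto. lra. Qed.
Lemma sumL_plus {A} (l : list A) f g : sumL l (fun x => f x + g x) = sumL l f + sumL l g.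
Proof. induction l; simpl; [ring|]. rewrite IHl; ring. Qed.
Lemma sumL_scal {A} (l : list A) c f : sumL l (fun x => c * f x) = c * sumL l f.
Proof. induction l; simpl; [ring|]. rewrite IHl; ring. Qed.
Lemma sumL_const {A} (l : list A) c : sumL l (fun _ => c) = INR (length l) * c.
Proof. induction l; simpl length; simpl sumL; [simpl; ring|]. rewrite IHl, S_INR; ring. Qed.
Lemma sumL_map {A B} (l : list A) (g : A -> B) f : sumL (map g l) f = sumL l (fun x => f (g x)).
Proof. induction l; simpl; auto. rewrite IHl; auto. Qed.
Lemma sumL_flat_map {A B} (l : list A) (g : A -> list B) f : sumL (flat_map g l) f = sumL l (fun x => sumL (g x) f).
Proof. induction l; simpl; auto. rewrite sumL_app, IHl; auto. Qed.
Lemma sumL_swap {A B} (l1 : list A) (l2 : list B) g :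
  sumL l1 (fun x => sumL l2 (g x)) = sumL l2 (fun y => sumL l1 (fun x => g x y)).
Proof. induction l1; simpl. induction l2; simpl; auto; rewrite <- IHl2; ring.
  rewrite IHl1. rewrite <- sumL_plus. auto. Qed.
Lemma sumL_term_le {A} (l : list A) f x : (forall y, In y l -> 0 <= f y) -> In x l -> f x <= sumL l f.
Proof. induction l; simpl; intros H Hx; [tauto|]. assert (0 <= sumL l f) by (apply sumL_nonneg; auto).
  destruct Hx as [->|Hx]. lra. assert (f x <= sumL l f) by auto. assert (0 <= f a) by auto. lra. Qed.

Lemma sumL_ind_le1 {A} (l : list A) (P : A -> Prop) : NoDup l ->
  (forall c c', In c l -> In c' l -> P c -> P c' -> c = c') -> sumL l (fun c => ind (P c)) <= 1.
Proof. induction l as [|c0 l IH]; simpl; intros Hn Hu; [lra|]. inversion Hn; subst.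
  destruct (excluded_middle_informative (P c0)).
  - rewrite ind_1 by auto. rewrite (sumL_ext l _ (fun _ => 0)). rewrite sumL_const; lra.
    intros x Hx. apply ind_0. intro Px. assert (x = c0) by (apply Hu; auto). subst; tauto.
  - rewrite ind_0 by auto. assert (sumL l (fun c => ind (P c)) <= 1) by (apply IH; auto). lra. Qed.

Lemma prodd_ext d f g : (forall j, (j < d)%nat -> f j = g j) -> prodd d f = prodd d g.
Proof. induction d; simpl; intros; auto. rewrite IHd by (intros; apply H; lia). rewrite H by lia; auto. Qed.
Lemma prodd_nonneg d f : (forall j, (j < d)%nat -> 0 <= f j) -> 0 <= prodd d f.
Proof. induction d; simpl; intros; [lra|]. apply Rmult_le_pos. apply IHd; intros; apply H; lia. apply H; lia. Qed.
Lemma prodd_le d f g : (forall j, (j < d)%nat -> 0 <= f j <= g j) -> prodd d f <= prodd d g.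
Proof. induction d; simpl; intros; [lra|]. apply Rmult_le_compat.
  apply prodd_nonneg; intros; apply H; lia. apply H; lia. apply IHd; intros; apply H; lia. apply H; lia. Qed.
Lemma prodd_scal d c f : prodd d (fun j => c * f j) = c ^ d * prodd d f.
Proof. induction d; simpl; [ring|]. rewrite IHd; ring. Qed.
Lemma ind_prod d (P : nat -> Prop) : ind (forall j, (j < d)%nat -> P j) = prodd d (fun j => ind (P j)).
Proof. induction d; simpl. apply ind_1; intros; lia.
  rewrite <- IHd. destruct (excluded_middle_informative (P d)).
  - rewrite (ind_1 (P d)) by auto. rewrite Rmult_1_r. apply ind_ext. split; intros H j Hj; auto.
    destruct (Nat.eq_dec j d); [subst; auto | apply H; lia].
  - rewrite (ind_0 (P d)) by auto. rewrite Rmult_0_r. apply ind_0. intro H; apply n; apply H; lia. Qed.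
Lemma prodd_le_pow d f A : (forall j, (j < d)%nat -> 0 <= f j <= A) -> prodd d f <= A ^ d.
Proof. intros. replace (A ^ d) with (prodd d (fun _ => A)). apply prodd_le; auto.
  clear; induction d; simpl; auto. rewrite IHd; ring. Qed.

Fixpoint plist (d : nat) (r : list Z) : list (list Z) :=
  match d with O => nil :: nil | S n => flat_map (fun l => map (fun t => l ++ t :: nil) r) (plist n r) end.

Lemma plist_len d r k : In k (plist d r) -> length k = d.
Proof. revert k; induction d; simpl; intros k H. destruct H as [<-|[]]; auto.
  apply in_flat_map in H. destruct H as [l [Hl Hk]]. apply in_map_iff in Hk. destruct Hk as [t [<- _]].
  rewrite length_app, (IHd l Hl). simpl. lia. Qed.

Lemma plist_in d r k : In k (plist d r) <-> length k = d /\ forall j, (j < d)%nat -> In (nth j k 0%Z) r.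
Proof. revert k; induction d; intros k; simpl. split.
  - intros [<-|[]]; split; auto; intros; lia.
  - intros [H _]; left; destruct k; simpl in *; auto; lia.
  - rewrite in_flat_map. split.
    + intros [l [Hl Hk]]. apply in_map_iff in Hk. destruct Hk as [t [<- Ht]].
      apply IHd in Hl. destruct Hl as [Hl1 Hl2]. split. rewrite length_app; simpl; lia.
      intros j Hj. destruct (Nat.eq_dec j d) as [->|].
      rewrite app_nth2 by lia. rewrite Hl1, Nat.sub_diag; auto.
      rewrite app_nth1 by lia. apply Hl2; lia.
    + intros [H1 H2]. destruct (exists_last (l := k)) as [l [t Hk]].
      { intro E; subst; simpl in H1; lia. }
      subst k. rewrite length_app in H1; simpl in H1.
      exists l. split. apply IHd. split. lia. intros j Hj. specialize (H2 j ltac:(lia)).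
      rewrite app_nth1 in H2 by lia. auto.
      apply in_map_iff. exists t. split; auto. specialize (H2 d ltac:(lia)).
      rewrite app_nth2 in H2 by lia. replace (d - length l)%nat with 0%nat in H2 by lia. auto. Qed.

Lemma NoDup_map_inj {A B} (f : A -> B) l : (forall x y, f x = f y -> x = y) -> NoDup l -> NoDup (map f l).
Proof. intros Hf Hn; induction Hn; simpl; constructor; auto.
  intro H'. apply in_map_iff in H'. destruct H' as [y [Hy Hy']]. apply Hf in Hy. subst; tauto. Qed.

Lemma plist_nodup d r : NoDup r -> NoDup (plist d r).
Proof. intros Hr. induction d; simpl. constructor; [simpl; tauto | constructor].
  induction IHd as [|l ls Hl Hls IH]; simpl. constructor.
  apply NoDup_app. apply NoDup_map_inj; auto. intros x y E. apply app_inv_head in E. congruence.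
  apply IH. intros k Hk Hk'. apply in_map_iff in Hk. destruct Hk as [t [<- _]].
  apply in_flat_map in Hk'. destruct Hk' as [l' [Hl' Hk']]. apply in_map_iff in Hk'. destruct Hk' as [t' [E _]].
  apply app_inj_tail in E. destruct E; subst; tauto. Qed.

Lemma plist_prod d r (f : nat -> Z -> R) :
  sumL (plist d r) (fun k => prodd d (fun j => f j (nth j k 0%Z))) = prodd d (fun j => sumL r (f j)).
Proof. induction d; simpl. ring. rewrite sumL_flat_map. rewrite <- IHd.
  rewrite (Rmult_comm _ (sumL r (f d))), <- sumL_scal.
  apply sumL_ext. intros l Hl. pose proof (plist_len d r l Hl) as Hlen.
  rewrite sumL_map. rewrite (sumL_ext r _ (fun t => prodd d (fun j => f j (nth j l 0%Z)) * f d t)).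
  rewrite sumL_scal. ring.
  intros t _. f_equal. apply prodd_ext. intros j Hj. rewrite app_nth1 by lia. auto.
  rewrite app_nth2 by lia. rewrite Hlen, Nat.sub_diag. auto. Qed.

Definition rng (M : nat) : list Z := map (fun i => (Z.of_nat i - Z.of_nat M)%Z) (seq 0 (2 * M + 1)).

Lemma rng_in M t : In t (rng M) <-> (- Z.of_nat M <= t <= Z.of_nat M)%Z.
Proof. unfold rng. rewrite in_map_iff. split.
  - intros [i [<- Hi]]. apply in_seq in Hi. lia.
  - intros H. exists (Z.to_nat (t + Z.of_nat M)). split. lia. apply in_seq. lia. Qed.
Lemma rng_nodup M : NoDup (rng M).
Proof. apply NoDup_map_inj. intros; lia. apply seq_NoDup. Qed.

Lemma cnt_up n lo A B : sumL (seq 0 n) (fun i => ind (A <= lo + INR i <= B)) <= Rmax 0 (Rmin B (lo + INR n - 1) - A + 1).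
Proof. induction n. simpl. apply Rmax_l.
  rewrite seq_S, sumL_app. simpl sumL. rewrite Rplus_0_r.
  rewrite S_INR. destruct (excluded_middle_informative (A <= lo + INR n <= B)) as [H|H].
  - rewrite ind_1 by auto. eapply Rle_trans. apply Rplus_le_compat_r. apply IHn.
    unfold Rmax, Rmin. repeat (destruct Rle_dec); lra.
  - rewrite ind_0 by auto. rewrite Rplus_0_r. eapply Rle_trans. apply IHn.
    unfold Rmax, Rmin. repeat (destruct Rle_dec); lra. Qed.

Lemma cnt_low n lo A B : Rmin B (lo + INR n) - Rmax A lo - 1 <= sumL (seq 0 n) (fun i => ind (A <= lo + INR i < B)).
Proof. induction n. simpl. unfold Rmax, Rmin. repeat (destruct Rle_dec); lra.
  assert (H0: 0 <= sumL (seq 0 n) (fun i => ind (A <= lo + INR i < B))) by (apply sumL_nonneg; intros; apply ind_ge0).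
  rewrite seq_S, sumL_app. simpl sumL. rewrite Rplus_0_r.
  rewrite S_INR. destruct (excluded_middle_informative (A <= lo + INR n < B)) as [H|H].
  - rewrite ind_1 by auto. unfold Rmax, Rmin in *. repeat (destruct Rle_dec); lra.
  - rewrite ind_0 by auto. unfold Rmax, Rmin in *. repeat (destruct Rle_dec); lra. Qed.


Definition hc (d : nat) (s : nat -> R) (c : list Z) (x : nat -> R) : Prop :=
  forall j, (j < d)%nat -> (IZR (nth j c 0%Z) - / 2) * s j <= x j < (IZR (nth j c 0%Z) + / 2) * s j.
Definition cb (d : nat) (a b : nat -> R) (x : nat -> R) : Prop :=
  forall j, (j < d)%nat -> a j <= x j <= b j.

Lemma int_close (a b : Z) : IZR a - IZR b < 1 -> IZR b - IZR a < 1 -> a = b.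
Proof. intros H1 H2. rewrite <- minus_IZR in H1, H2. apply lt_IZR in H1. apply lt_IZR in H2. lia. Qed.

Lemma cell_unique d s c c' x : (forall j, (j < d)%nat -> 0 < s j) -> length c = d -> length c' = d ->
  hc d s c x -> hc d s c' x -> c = c'.
Proof. intros Hs Hc Hc' H1 H2. apply (nth_ext c c' 0%Z 0%Z). congruence.
  intros j Hj. rewrite Hc in Hj. specialize (H1 j Hj). specialize (H2 j Hj). specialize (Hs j Hj).
  apply int_close.
  - apply Rmult_lt_reg_r with (s j); auto. nra.
  - apply Rmult_lt_reg_r with (s j); auto. nra. Qed.

Lemma div_le_iff a t K : 0 < K -> (a <= t / K <-> K * a <= t).
Proof. intros HK. split; intros H.
  - apply Rmult_le_compat_l with (r := K) in H; [|lra]. replace (K * (t / K)) with t in H by (field; lra). auto.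
  - apply Rmult_le_reg_l with K; auto. replace (K * (t / K)) with t by (field; lra). auto. Qed.
Lemma div_lt_iff a t K : 0 < K -> (t / K < a <-> t < K * a).
Proof. intros HK. split; intros H.
  - apply Rmult_lt_compat_l with (r := K) in H; [|lra]. replace (K * (t / K)) with t in H by (field; lra). auto.
  - apply Rmult_lt_reg_l with K; auto. replace (K * (t / K)) with t by (field; lra). auto. Qed.
Lemma div_ge_iff a t K : 0 < K -> (t / K <= a <-> t <= K * a).
Proof. intros HK. split; intros H.
  - apply Rmult_le_compat_l with (r := K) in H; [|lra]. replace (K * (t / K)) with t in H by (field; lra). auto.
  - apply Rmult_le_reg_l with K; auto. replace (K * (t / K)) with t by (field; lra). auto. Qed.

Lemma rng_sum M (f : R -> R) : sumL (rng M) (fun t => f (IZR t)) = sumL (seq 0 (2 * M + 1)) (fun i => f (- INR M + INR i)).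
Proof. unfold rng. rewrite sumL_map. apply sumL_ext. intros i _. f_equal. rewrite minus_IZR, <- !INR_IZR_INZ. ring. Qed.

Lemma cnt1_low M K a b : 0 < K -> - INR M <= K * a -> K * b <= INR M + 1 ->
  K * (b - a) - 1 <= sumL (rng M) (fun t => ind (a <= IZR t / K < b)).
Proof. intros HK H1 H2.
  rewrite (rng_sum M (fun u => ind (a <= u / K < b))).
  rewrite (sumL_ext _ _ (fun i => ind (K * a <= - INR M + INR i < K * b))).
  eapply Rle_trans; [|apply cnt_low]. rewrite plus_INR, mult_INR. simpl INR.
  unfold Rmax, Rmin. repeat destruct Rle_dec; lra.
  intros i _. apply ind_ext. rewrite div_le_iff, div_lt_iff by auto. tauto. Qed.

Lemma cnt1_up M K a b : 0 < K -> a <= b ->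
  sumL (rng M) (fun t => ind (a <= IZR t / K <= b)) <= K * (b - a) + 1.
Proof. intros HK H1.
  rewrite (rng_sum M (fun u => ind (a <= u / K <= b))).
  rewrite (sumL_ext _ _ (fun i => ind (K * a <= - INR M + INR i <= K * b))).
  eapply Rle_trans; [apply cnt_up|].
  assert (K * a <= K * b) by (apply Rmult_le_compat_l; lra).
  unfold Rmax, Rmin. repeat destruct Rle_dec; lra.
  intros i _. apply ind_ext. rewrite div_le_iff, div_ge_iff by auto. tauto. Qed.

Lemma INR_up_ge x : 0 <= x -> x <= INR (Z.to_nat (up x)).
Proof. intros Hx. destruct (archimed x) as [H1 _]. assert (0 < IZR (up x)) by lra.
  apply lt_IZR in H. rewrite INR_IZR_INZ. rewrite Z2Nat.id by lia. lra. Qed.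

Lemma count_K (d : nat) (L : list (list Z)) (s : nat -> R) (N0 : nat) (Al Bl : nat -> nat -> R)
  (Hs : forall j, (j < d)%nat -> 0 < s j) (HL : NoDup L) (HLlen : forall c, In c L -> length c = d)
  (HAB : forall n j, Al n j <= Bl n j)
  (Hcov : forall c x, In c L -> hc d s c x -> exists n, (n < N0)%nat /\ cb d (Al n) (Bl n) x)
  (K : nat) : (1 <= K)%nat ->
  INR (length L) * prodd d (fun j => INR K * s j - 1) <=
  sumL (seq 0 N0) (fun n => prodd d (fun j => INR K * (Bl n j - Al n j) + 1))
  \/ exists j, (j < d)%nat /\ INR K * s j < 1.
Proof.
  intros HK1. destruct (classic (exists j, (j < d)%nat /\ INR K * s j < 1)) as [Hex|Hnex]; [right; auto | left].
  assert (HKs: forall j, (j < d)%nat -> 1 <= INR K * s j).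
  { intros j Hj. destruct (Rle_lt_dec 1 (INR K * s j)); auto. exfalso; apply Hnex; eauto. }
  assert (HK: 0 < INR K) by (apply lt_0_INR; lia).
  set (W := sumL L (fun c => sumd d (fun j => (Rabs (IZR (nth j c 0%Z)) + 1) * s j))).
  assert (HW: forall c j, In c L -> (j < d)%nat -> (Rabs (IZR (nth j c 0%Z)) + 1) * s j <= W).
  { intros c j Hc Hj. eapply Rle_trans; [| apply (sumL_term_le L _ c)]; auto.
    apply (sumd_term_le d (fun j => (Rabs (IZR (nth j c 0%Z)) + 1) * s j)); auto.
    intros; apply Rmult_le_pos; [pose proof (Rabs_pos (IZR (nth j0 c 0%Z))); lra | left; auto].
    intros y _. apply sumd_nonneg. intros; apply Rmult_le_pos; [pose proof (Rabs_pos (IZR (nth j0 y 0%Z))); lra | left; auto]. }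
  assert (HW0: 0 <= W). { apply sumL_nonneg. intros y _. apply sumd_nonneg. intros; apply Rmult_le_pos; [pose proof (Rabs_pos (IZR (nth j y 0%Z))); lra | left; auto]. }
  set (M := Z.to_nat (up (INR K * W))).
  assert (HM: INR K * W <= INR M) by (apply INR_up_ge; apply Rmult_le_pos; lra).
  set (G := plist d (rng M)).
  set (xk := fun (k : list Z) (j : nat) => IZR (nth j k 0%Z) / INR K).
  assert (Hpt: forall k, sumL L (fun c => ind (hc d s c (xk k))) <= sumL (seq 0 N0) (fun n => ind (cb d (Al n) (Bl n) (xk k)))).
  { intros k. destruct (classic (exists c, In c L /\ hc d s c (xk k))) as [[c [Hc Hh]]|Hno].
    - destruct (Hcov c (xk k) Hc Hh) as [n [Hn Hb]].
      eapply Rle_trans. apply sumL_ind_le1; auto. intros c1 c2 H1 H2 H3 H4. apply (cell_unique d s c1 c2 (xk k)); auto.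
      eapply Rle_trans; [| apply (sumL_term_le _ _ n)]. cbv beta. rewrite ind_1; auto; lra.
      intros; apply ind_ge0. apply in_seq; lia.
    - rewrite (sumL_ext L _ (fun _ => 0)). rewrite sumL_const, Rmult_0_r. apply sumL_nonneg; intros; apply ind_ge0.
      intros c Hc. apply ind_0. intro; apply Hno; eauto. }
  assert (Htot := sumL_le G _ _ (fun k _ => Hpt k)).
  rewrite (sumL_swap G L), (sumL_swap G (seq 0 N0)) in Htot.
  eapply Rle_trans; [| eapply Rle_trans; [apply Htot|]].
  - rewrite <- sumL_const. apply sumL_le. intros c Hc.
    rewrite (sumL_ext G _ (fun k => prodd d (fun j => (fun j t => ind ((IZR (nth j c 0%Z) - / 2) * s j <= IZR t / INR K < (IZR (nth j c 0%Z) + / 2) * s j)) j (nth j k 0%Z)))).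
    unfold G. rewrite (plist_prod d (rng M) (fun j t => ind ((IZR (nth j c 0%Z) - / 2) * s j <= IZR t / INR K < (IZR (nth j c 0%Z) + / 2) * s j))).
    apply prodd_le. intros j Hj. split. specialize (HKs j Hj); lra.
    specialize (HW c j Hc Hj). specialize (Hs j Hj). pose proof (Rabs_pos (IZR (nth j c 0%Z))).
    pose proof (Rle_abs (IZR (nth j c 0%Z))). pose proof (Rle_abs (- IZR (nth j c 0%Z))). rewrite Rabs_Ropp in H1.
    eapply Rle_trans; [| apply cnt1_low]; auto.
    + right. field.
    + assert (INR K * ((IZR (nth j c 0%Z) - / 2) * s j) >= - (INR K * W)); [| lra].
      assert ((IZR (nth j c 0%Z) - / 2) * s j >= - W) by nra. nra.
    + assert (INR K * ((IZR (nth j c 0%Z) + / 2) * s j) <= INR K * W); [| lra].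
      apply Rmult_le_compat_l; nra.
    + intros k _. unfold xk, hc. apply ind_prod.
  - apply sumL_le. intros n _.
    rewrite (sumL_ext G _ (fun k => prodd d (fun j => (fun j t => ind (Al n j <= IZR t / INR K <= Bl n j)) j (nth j k 0%Z)))).
    unfold G. rewrite (plist_prod d (rng M) (fun j t => ind (Al n j <= IZR t / INR K <= Bl n j))).
    apply prodd_le. intros j Hj. split.
    apply sumL_nonneg; intros; apply ind_ge0. apply cnt1_up; auto.
    intros k _. unfold xk, cb. apply ind_prod.
Qed.


Lemma pow_ge1 A n : 0 <= A -> 1 <= (A + 1) ^ n.
Proof. intros. induction n; simpl; [lra|]. nra. Qed.

Lemma prod_up d l A h : (forall j, (j < d)%nat -> 0 <= l j <= A) -> 0 <= h <= 1 ->
  prodd d (fun j => l j + h) <= prodd d l + h * INR d * (A + 1) ^ d.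
Proof. intros Hl Hh. induction d. simpl; lra.
  assert (HA: 0 <= A) by (specialize (Hl d ltac:(lia)); lra).
  assert (IH: prodd d (fun j => l j + h) <= prodd d l + h * INR d * (A + 1) ^ d) by (apply IHd; intros; apply Hl; lia).
  assert (P0: 0 <= prodd d l) by (apply prodd_nonneg; intros; apply Hl; lia).
  assert (P1: prodd d l <= (A + 1) ^ d) by (apply prodd_le_pow; intros; specialize (Hl j ltac:(lia)); lra).
  assert (P2: 0 <= prodd d (fun j => l j + h)) by (apply prodd_nonneg; intros; specialize (Hl j ltac:(lia)); lra).
  simpl prodd. rewrite S_INR. simpl pow. specialize (Hl d ltac:(lia)).
  set (P := prodd d l) in *. set (P' := prodd d (fun j => l j + h)) in *. set (E := (A + 1) ^ d) in *.
  assert (HE: 0 <= INR d) by apply pos_INR.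
  assert (P' * (l d + h) <= (P + h * INR d * E) * (l d + h)) by (apply Rmult_le_compat_r; lra).
  assert (h * INR d * E * (l d + h) <= h * INR d * E * (A + 1)).
  { apply Rmult_le_compat_l. apply Rmult_le_pos; [apply Rmult_le_pos|]; lra. lra. }
  assert (P * h <= E * h) by (apply Rmult_le_compat_r; lra).
  assert (E * h <= (A + 1) * E * h).
  { assert (0 <= E * h * A) by (apply Rmult_le_pos; [apply Rmult_le_pos|]; lra). nra. }
  nra. Qed.

Lemma prod_down d s A h : (forall j, (j < d)%nat -> h <= s j <= A) -> 0 <= h ->
  prodd d s - h * INR d * (A + 1) ^ d <= prodd d (fun j => s j - h).
Proof. intros Hl Hh. induction d. simpl; lra.
  assert (HA: 0 <= A) by (specialize (Hl d ltac:(lia)); lra).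
  assert (IH: prodd d s - h * INR d * (A + 1) ^ d <= prodd d (fun j => s j - h)) by (apply IHd; intros; apply Hl; lia).
  assert (P0: 0 <= prodd d s) by (apply prodd_nonneg; intros; specialize (Hl j ltac:(lia)); lra).
  assert (P1: prodd d s <= (A + 1) ^ d) by (apply prodd_le_pow; intros; specialize (Hl j ltac:(lia)); lra).
  simpl prodd. rewrite S_INR. simpl pow. specialize (Hl d ltac:(lia)).
  set (P := prodd d s) in *. set (P' := prodd d (fun j => s j - h)) in *. set (E := (A + 1) ^ d) in *.
  assert (HE: 0 <= INR d) by apply pos_INR.
  assert ((P - h * INR d * E) * (s d - h) <= P' * (s d - h)) by (apply Rmult_le_compat_r; lra).
  assert (h * INR d * E * (s d - h) <= h * INR d * E * (A + 1)).
  { apply Rmult_le_compat_l. apply Rmult_le_pos; [apply Rmult_le_pos|]; lra. lra. }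
  assert (P * h <= E * h) by (apply Rmult_le_compat_r; lra).
  assert (E * h <= (A + 1) * E * h).
  { assert (0 <= E * h * A) by (apply Rmult_le_pos; [apply Rmult_le_pos|]; lra). nra. }
  nra. Qed.

Lemma archi_le0 X Y K0 : (forall K, (K0 <= K)%nat -> (1 <= K)%nat -> X <= Y / INR K) -> X <= 0.
Proof. intros H. destruct (Rle_lt_dec X 0); auto. exfalso.
  destruct (INR_unbounded (Rabs Y / X)) as [n Hn].
  set (K := (K0 + n + 1)%nat). specialize (H K ltac:(unfold K; lia) ltac:(unfold K; lia)).
  assert (HK: INR n < INR K) by (apply lt_INR; unfold K; lia).
  assert (HK0: 0 < INR K) by (pose proof (pos_INR n); lra).
  apply div_le_iff in H; auto.
  assert (Rabs Y < INR K * X).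
  { assert (Rabs Y / X < INR K) by lra. apply (div_lt_iff (INR K) (Rabs Y) X) in H0; auto. lra. }
  pose proof (Rle_abs Y). lra. Qed.

Lemma sumL_seq_nonneg N (f : nat -> R) : (forall n, 0 <= f n) -> 0 <= sumL (seq 0 N) f.
Proof. intros; apply sumL_nonneg; auto. Qed.

Lemma fin_add d L s N0 Al Bl :
  (forall j, (j < d)%nat -> 0 < s j) -> NoDup L -> (forall c, In c L -> length c = d) ->
  (forall n j, Al n j <= Bl n j) ->
  (forall c x, In c L -> hc d s c x -> exists n, (n < N0)%nat /\ cb d (Al n) (Bl n) x) ->
  INR (length L) * prodd d s <= sumL (seq 0 N0) (fun n => prodd d (fun j => Bl n j - Al n j)).
Proof.
  intros Hs HL HLlen HAB Hcov.
  set (C := INR (length L)). assert (HC: 0 <= C) by apply pos_INR.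
  set (As := sumd d s). set (Ds := INR d * (As + 1) ^ d).
  set (An := fun n => sumd d (fun j => Bl n j - Al n j)). set (Dn := fun n => INR d * (An n + 1) ^ d).
  set (Y := C * Ds + sumL (seq 0 N0) Dn).
  set (K0 := Z.to_nat (up (sumd d (fun j => / s j)))).
  assert (Hsi: forall j, (j < d)%nat -> / s j <= sumd d (fun j => / s j)).
  { intros. apply (sumd_term_le d (fun j => / s j)); auto. intros; left; apply Rinv_0_lt_compat; auto. }
  assert (HK0: sumd d (fun j => / s j) <= INR K0).
  { apply INR_up_ge. apply sumd_nonneg. intros; left; apply Rinv_0_lt_compat; auto. }
  assert (C * prodd d s - sumL (seq 0 N0) (fun n => prodd d (fun j => Bl n j - Al n j)) <= 0); [|lra].
  apply (archi_le0 _ Y K0). intros K HK HK1.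
  assert (HKp: 0 < INR K) by (apply lt_0_INR; lia).
  assert (HKs: forall j, (j < d)%nat -> 1 <= INR K * s j).
  { intros j Hj. specialize (Hsi j Hj). assert (/ s j <= INR K) by (apply le_INR in HK; lra).
    specialize (Hs j Hj). apply Rmult_le_compat_r with (r := s j) in H; [|lra].
    rewrite Rinv_l in H by lra. lra. }
  destruct (count_K d L s N0 Al Bl Hs HL HLlen HAB Hcov K HK1) as [Hc|[j [Hj Hj']]];
    [| specialize (HKs j Hj); lra].
  set (h := / INR K). assert (Hh: 0 < h) by (apply Rinv_0_lt_compat; auto).
  assert (Hh1: h <= 1). { unfold h. rewrite <- Rinv_1. apply Rinv_le_contravar; [lra|]. apply (le_INR 1); lia. }
  rewrite (prodd_ext d (fun j => INR K * s j - 1) (fun j => INR K * (s j - h))) in Hc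
    by (intros; unfold h; field; lra).
  rewrite (sumL_ext _ (fun n => prodd d (fun j => INR K * (Bl n j - Al n j) + 1))
             (fun n => prodd d (fun j => INR K * ((Bl n j - Al n j) + h)))) in Hc
    by (intros; apply prodd_ext; intros; unfold h; field; lra).
  rewrite prodd_scal in Hc. rewrite (sumL_ext _ _ (fun n => INR K ^ d * prodd d (fun j => (Bl n j - Al n j) + h))) in Hc
    by (intros; apply prodd_scal).
  rewrite sumL_scal in Hc.
  assert (HKd: 0 < INR K ^ d) by (apply pow_lt; auto).
  assert (Hc2: C * prodd d (fun j => s j - h) <= sumL (seq 0 N0) (fun n => prodd d (fun j => Bl n j - Al n j + h))).
  { apply Rmult_le_reg_l with (INR K ^ d); auto. unfold C in *. lra. }
  assert (Hlow: prodd d s - h * Ds <= prodd d (fun j => s j - h)).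
  { unfold Ds. rewrite <- Rmult_assoc. apply prod_down; [|lra]. intros j Hj. split.
    - specialize (HKs j Hj). specialize (Hs j Hj). unfold h.
      apply Rmult_le_reg_l with (INR K); auto. rewrite Rinv_r by lra. lra.
    - apply (sumd_term_le d s); auto. intros; left; auto. }
  assert (Hupp: sumL (seq 0 N0) (fun n => prodd d (fun j => Bl n j - Al n j + h)) <=
     sumL (seq 0 N0) (fun n => prodd d (fun j => Bl n j - Al n j)) + h * sumL (seq 0 N0) Dn).
  { rewrite <- sumL_scal, <- sumL_plus. apply sumL_le. intros n _. unfold Dn.
    rewrite <- Rmult_assoc. apply prod_up; [|lra]. intros j Hj. split. specialize (HAB n j); lra.
    apply (sumd_term_le d (fun j => Bl n j - Al n j)); auto. intros; specialize (HAB n j0); lra. }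
  assert (C * (prodd d s - h * Ds) <= C * prodd d (fun j => s j - h)) by (apply Rmult_le_compat_l; auto).
  unfold Y. replace ((C * Ds + sumL (seq 0 N0) Dn) / INR K) with (h * (C * Ds + sumL (seq 0 N0) Dn)) by (unfold h; field; lra).
  nra.
Qed.


Lemma sum_f_seq f n : sum_f_R0 f n = sumL (seq 0 (S n)) f.
Proof. induction n. simpl. ring. change (sum_f_R0 f (S n)) with (sum_f_R0 f n + f (S n)).
  rewrite IHn. rewrite (seq_S (S n)), sumL_app. simpl. ring. Qed.

Lemma sumL_nth_pad {T} (L : list T) (dft : T) (f : T -> R) K : f dft = 0 -> (length L <= K)%nat ->
  sumL (seq 0 K) (fun i => f (nth i L dft)) = sumL L f.
Proof. revert K; induction L as [|x L IH]; intros K H0 HK.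
  - simpl. rewrite (sumL_ext _ _ (fun _ => 0)). rewrite sumL_const; ring. intros i _. destruct i; auto.
  - destruct K; simpl in HK; [lia|]. simpl. rewrite <- seq_shift, sumL_map. simpl. rewrite IH; auto. lia. Qed.

Lemma sum_f_mono f n m : (forall k, 0 <= f k) -> (n <= m)%nat -> sum_f_R0 f n <= sum_f_R0 f m.
Proof. intros Hf H. induction H. lra. simpl. specialize (Hf (S m)). lra. Qed.

Lemma infsum_partial f s : (forall n, 0 <= f n) -> infinite_sum f s -> forall n, sum_f_R0 f n <= s.
Proof. intros Hf Hs n. destruct (Rle_lt_dec (sum_f_R0 f n) s); auto. exfalso.
  destruct (Hs (sum_f_R0 f n - s)) as [N HN]. lra.
  specialize (HN (Nat.max n N) ltac:(lia)).
  pose proof (sum_f_mono f n (Nat.max n N) Hf ltac:(lia)).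
  unfold Rdist in HN. apply Rabs_def2 in HN. lra. Qed.

Lemma infsum_ge0 f s : (forall n, 0 <= f n) -> infinite_sum f s -> 0 <= s.
Proof. intros Hf Hs. pose proof (infsum_partial f s Hf Hs 0). simpl in H. specialize (Hf 0%nat). lra. Qed.

Lemma sumL_seq_le_infsum f s N : (forall n, 0 <= f n) -> infinite_sum f s -> sumL (seq 0 N) f <= s.
Proof. intros Hf Hs. destruct N. simpl. apply (infsum_ge0 f s); auto.
  rewrite <- sum_f_seq. apply infsum_partial; auto. Qed.

Lemma geom_sum N : sumL (seq 0 N) (fun n => / 2 ^ (S n)) = 1 - / 2 ^ N.
Proof. induction N. simpl. field. rewrite seq_S, sumL_app, IHN. simpl. field. apply pow_nonzero; lra. Qed.

Lemma list_bound {T} (l : list T) (Q : T -> nat -> Prop) :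
  (forall c N N', Q c N -> (N <= N')%nat -> Q c N') -> (forall c, In c l -> exists N, Q c N) ->
  exists M, forall c, In c l -> Q c M.
Proof. intros Hm. induction l as [|c0 l IH]; intros H. exists 0%nat; intros c [].
  destruct IH as [M HM]. intros; apply H; simpl; auto.
  destruct (H c0) as [N0 HN0]. simpl; auto.
  exists (Nat.max M N0). intros c [<-|Hc]. apply (Hm _ N0); auto; lia. apply (Hm _ M); auto; lia. Qed.

Lemma box_vol_zero d : (1 <= d)%nat -> box_vol d (fun _ => 0) (fun _ => 0) = 0.
Proof. intros. unfold box_vol. destruct d; [lia|]. simpl. ring. Qed.

Lemma finite_cover d (A : (nat -> R) -> Prop) (BL : list ((nat -> R) * (nat -> R))) : (1 <= d)%nat ->
  (forall p, In p BL -> forall j, (j < d)%nat -> fst p j <= snd p j) ->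
  (forall x, A x -> exists p, In p BL /\ in_box d (fst p) (snd p) x) ->
  cover_sum d A (sumL BL (fun p => box_vol d (fst p) (snd p))).
Proof. intros Hd Hle Hcov. set (z := ((fun _ : nat => 0), (fun _ : nat => 0))).
  exists (fun n => fst (nth n BL z)), (fun n => snd (nth n BL z)). split; [|split].
  - intros n j Hj. destruct (Nat.lt_ge_cases n (length BL)).
    apply Hle; auto. apply nth_In; auto. rewrite nth_overflow by auto. simpl; lra.
  - intros x Hx. destruct (Hcov x Hx) as [p [Hp Hb]]. apply (In_nth BL p z) in Hp. destruct Hp as [n [_ E]].
    exists n. rewrite E. auto.
  - intros eps Heps. exists (length BL). intros n Hn. unfold Rdist.
    rewrite sum_f_seq. rewrite (sumL_nth_pad BL z (fun p => box_vol d (fst p) (snd p))).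
    rewrite Rminus_diag, Rabs_R0; auto. simpl. apply box_vol_zero; auto. lia. Qed.


Definition kvec (k : list Z) : nat -> R := fun j => IZR (nth j k 0%Z).

Lemma prod_inv_lam d Rv mu : 0 < mu ->
  prodd d (fun j => / rpow mu (pR d Rv / Rv j)) = / rpow mu (pR d Rv / gR d Rv).
Proof. intros Hmu. unfold gR. unfold Rdiv at 2. rewrite Rinv_inv.
  set (P := pR d Rv). clearbody P. induction d.
  - simpl. rewrite Rmult_0_r. rewrite rpow_pos by auto. rewrite Rpower_O by auto. field.
  - simpl. rewrite IHd. rewrite <- Rinv_mult. f_equal. rewrite <- rpow_plus by auto. f_equal. unfold Rdiv; ring. Qed.

Lemma latset_iff d Rv m k : latset d Rv m k <-> length k = d /\ nrm d Rv (kvec k) <= INR m.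
Proof. unfold latset. rewrite nrm_le_iff by apply pos_INR. unfold Phi, kvec. tauto. Qed.

Lemma abs_to_Z (t : Z) (M : nat) : Rabs (IZR t) <= INR M -> (- Z.of_nat M <= t <= Z.of_nat M)%Z.
Proof. intros H. pose proof (Rle_abs (IZR t)). pose proof (Rle_abs (- IZR t)). rewrite Rabs_Ropp in H1.
  rewrite INR_IZR_INZ in H. split. apply le_IZR. rewrite opp_IZR. lra. apply le_IZR. lra. Qed.

Lemma lat_list d Rv m : (forall j, (j < d)%nat -> 0 < Rv j) ->
  exists Lf, NoDup Lf /\ forall k, In k Lf <-> latset d Rv m k.
Proof. intros HR. set (P := pR d Rv). pose proof (pR_ge d Rv) as HP. fold P in HP.
  set (Tm := rpow (INR m) (2 * P)). assert (HTm: 0 <= Tm) by (apply rpow_ge0, pos_INR).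
  set (T := sumd d (fun j => rpow Tm (/ (2 * Rv j)))).
  set (M := Z.to_nat (up T)).
  assert (HT: T <= INR M). { apply INR_up_ge. apply sumd_nonneg. intros; apply rpow_ge0; auto. }
  set (test := fun k => if Rle_dec (Phi d Rv (kvec k)) Tm then true else false).
  exists (filter test (plist d (rng M))). split.
  { apply NoDup_filter, plist_nodup, rng_nodup. }
  intros k. rewrite filter_In, plist_in. unfold latset. fold P. fold Tm.
  change (sumd d (fun j => rpow (Rabs (IZR (nth j k 0%Z))) (2 * Rv j))) with (Phi d Rv (kvec k)).
  unfold test. destruct (Rle_dec (Phi d Rv (kvec k)) Tm) as [Hle|Hle].
  - split. intros [[H1 _] _]; auto. intros [H1 H2]. split; auto. split; auto.
    intros j Hj. apply rng_in. apply abs_to_Z. eapply Rle_trans; [|apply HT].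
    eapply Rle_trans; [| apply (sumd_term_le d (fun j => rpow Tm (/ (2 * Rv j))) j)]; auto.
    2: intros; apply rpow_ge0; auto.
    specialize (HR j Hj). apply rpow_inv_le; [lra | apply Rabs_pos | auto |].
    eapply Rle_trans; [| apply Hle]. unfold Phi, kvec.
    apply (sumd_term_le d (fun j => rpow (Rabs (IZR (nth j k 0%Z))) (2 * Rv j))); auto.
    intros; apply rpow_ge0, Rabs_pos.
  - split. intros [_ H]; discriminate. intros [_ H]; tauto. Qed.


Lemma nth_round d (g : nat -> Z) j : (j < d)%nat -> nth j (map g (seq 0 d)) 0%Z = g j.
Proof. intros Hj. rewrite (nth_indep _ _ (g 0%nat)) by (rewrite length_map, length_seq; auto).
  rewrite map_nth, seq_nth by auto. auto. Qed.

Lemma upper_cover d Rv m Lf mu : (1 <= d)%nat -> (forall j, (j < d)%nat -> 0 < Rv j) ->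
  (forall k, In k Lf <-> latset d Rv m k) -> 0 < mu -> mu + bR d Rv = INR m ->
  cover_sum d (ball2R d Rv) (INR (length Lf) * / rpow mu (pR d Rv / gR d Rv)).
Proof. intros Hd HR HLf Hmu Hm.
  set (P := pR d Rv). set (lam := fun j => rpow mu (P / Rv j)).
  assert (Hlam: forall j, 0 < lam j) by (intros; apply rpow_gt0; auto).
  set (BL := map (fun k => ((fun j => (kvec k j - / 2) / lam j), (fun j => (kvec k j + / 2) / lam j))) Lf).
  assert (E: sumL BL (fun p => box_vol d (fst p) (snd p)) = INR (length Lf) * / rpow mu (P / gR d Rv)).
  { unfold BL. rewrite sumL_map. simpl. unfold box_vol.
    rewrite (sumL_ext _ _ (fun _ => prodd d (fun j => / rpow mu (P / Rv j)))).
    rewrite sumL_const. unfold P. rewrite prod_inv_lam; auto.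
    intros k _. apply prodd_ext. intros j _. unfold lam. specialize (Hlam j). unfold lam in Hlam. field. lra. }
  rewrite <- E. apply finite_cover; auto.
  - intros p Hp j Hj. unfold BL in Hp. apply in_map_iff in Hp. destruct Hp as [k [<- _]]. simpl.
    unfold Rdiv. apply Rmult_le_compat_r. left; apply Rinv_0_lt_compat; auto. lra.
  - intros x Hx. unfold ball2R in Hx.
    set (y := fun j => lam j * x j).
    assert (Hnx: nrm d Rv x <= 1). { apply nrm_le_iff. lra. rewrite rpow_1l. auto. }
    assert (Hny: nrm d Rv y = mu * nrm d Rv x) by (apply nrm_scale; auto).
    set (g := fun j => (up (y j + / 2) - 1)%Z).
    set (k := map g (seq 0 d)).
    assert (Hk: forall j, (j < d)%nat -> kvec k j = IZR (up (y j + / 2)) - 1).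
    { intros j Hj. unfold kvec, k. rewrite nth_round by auto. unfold g. rewrite minus_IZR. auto. }
    assert (Hkr: forall j, (j < d)%nat -> y j - / 2 < kvec k j <= y j + / 2).
    { intros j Hj. rewrite Hk by auto. destruct (archimed (y j + / 2)). lra. }
    assert (Hlat: latset d Rv m k).
    { apply latset_iff. split. unfold k. rewrite length_map, length_seq; auto.
      eapply Rle_trans. apply (nrm_near d Rv (kvec k) y); auto.
      intros j Hj. specialize (Hkr j Hj). apply Rabs_le. lra.
      rewrite Hny. pose proof (nrm_ge0 d Rv x). nra. }
    exists ((fun j => (kvec k j - / 2) / lam j), (fun j => (kvec k j + / 2) / lam j)). split.
    + unfold BL. apply in_map_iff. exists k. split; auto. apply HLf; auto.
    + intros j Hj. simpl. specialize (Hkr j Hj). specialize (Hlam j). unfold y in Hkr. split.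
      * apply div_ge_iff; auto. lra.
      * apply div_le_iff; auto. lra.
Qed.


Lemma lower_bound d Rv m Lf mu s : (forall j, (j < d)%nat -> 0 < Rv j) -> NoDup Lf ->
  (forall k, In k Lf <-> latset d Rv m k) -> 0 < mu -> mu = INR m + bR d Rv ->
  cover_sum d (ball2R d Rv) s ->
  INR (length Lf) * / rpow mu (pR d Rv / gR d Rv) <= s.
Proof. intros HR HL HLf Hmu Hm [a [b [Hab [Hcov Hsum]]]].
  set (P := pR d Rv). set (lam := fun j => rpow mu (P / Rv j)).
  assert (Hlam: forall j, 0 < lam j) by (intros; apply rpow_gt0; auto).
  set (sj := fun j => / lam j).
  assert (Hsj: forall j, 0 < sj j) by (intros; apply Rinv_0_lt_compat; auto).
  assert (Eprod: prodd d sj = / rpow mu (P / gR d Rv)) by (apply prod_inv_lam; auto).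
  rewrite <- Eprod. apply le_epsilon. intros eps Heps.
  set (An := fun n => sumd d (fun j => b n j - a n j)).
  set (Dn := fun n => INR d * (An n + 1) ^ d).
  assert (HDn: forall n, 0 <= Dn n).
  { intros n. unfold Dn. apply Rmult_le_pos. apply pos_INR. apply pow_le.
    assert (0 <= An n); [|lra]. apply sumd_nonneg. intros; specialize (Hab n j H); lra. }
  set (h := fun n => Rmin 1 (eps / (2 ^ (S n) * (Dn n + 1)))).
  assert (Hh: forall n, 0 < h n <= 1).
  { intros n. unfold h. split. apply Rmin_pos. lra. apply Rdiv_lt_0_compat; auto.
    apply Rmult_lt_0_compat. apply pow_lt; lra. specialize (HDn n); lra. apply Rmin_l. }
  assert (HhD: forall n, h n * Dn n <= eps / 2 ^ (S n)).
  { intros n. specialize (HDn n). specialize (Hh n).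
    assert (h n <= eps / (2 ^ (S n) * (Dn n + 1))) by apply Rmin_r.
    assert (P2: 0 < 2 ^ (S n)) by (apply pow_lt; lra).
    apply Rmult_le_compat_r with (r := Dn n + 1) in H; [|lra].
    replace (eps / (2 ^ S n * (Dn n + 1)) * (Dn n + 1)) with (eps / 2 ^ (S n)) in H by (field; lra). nra. }
  set (c := fun n j => Rmin (a n j) (b n j) - h n / 2).
  set (e := fun n j => b n j + h n / 2).
  set (lo := fun k j => (kvec k j - / 2) * sj j). set (hi := fun k j => (kvec k j + / 2) * sj j).
  assert (Hball: forall k x, In k Lf -> in_box d (lo k) (hi k) x -> ball2R d Rv x).
  { intros k x Hk Hx. apply HLf in Hk. apply latset_iff in Hk. destruct Hk as [_ Hk].
    set (y := fun j => lam j * x j).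
    assert (Hy: nrm d Rv y <= mu).
    { eapply Rle_trans. apply (nrm_near d Rv y (kvec k)); auto.
      intros j Hj. specialize (Hx j Hj). unfold lo, hi, sj in Hx. specialize (Hlam j).
      apply Rabs_le. unfold y.
      assert (kvec k j - / 2 <= lam j * x j).
      { apply Rmult_le_reg_l with (/ lam j). apply Rinv_0_lt_compat; auto.
        rewrite <- Rmult_assoc, Rinv_l by lra. lra. }
      assert (lam j * x j <= kvec k j + / 2).
      { apply Rmult_le_reg_l with (/ lam j). apply Rinv_0_lt_compat; auto.
        rewrite <- Rmult_assoc, Rinv_l by lra. lra. }
      lra. lra. }
    assert (Hny: nrm d Rv y = mu * nrm d Rv x) by (apply nrm_scale; auto).
    assert (nrm d Rv x <= 1).
    { apply Rmult_le_reg_l with mu; auto. lra. }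
    unfold ball2R. apply nrm_le_iff in H; [|lra]. rewrite rpow_1l in H. auto. }
  assert (Hfin: forall k, In k Lf -> exists N, forall x, in_box d (lo k) (hi k) x ->
      exists n, (n < N)%nat /\ True /\ in_obox d (c n) (e n) x).
  { intros k Hk. apply box_compact. intros x Hx. destruct (Hcov x (Hball k x Hk Hx)) as [n Hn].
    exists n. split; auto. intros j Hj. specialize (Hn j Hj). specialize (Hab n j Hj). specialize (Hh n).
    unfold c, e. rewrite Rmin_left by lra. lra. }
  destruct (list_bound Lf (fun k N => forall x, in_box d (lo k) (hi k) x ->
      exists n, (n < N)%nat /\ True /\ in_obox d (c n) (e n) x)) as [N0 HN0]; auto.
  { intros k N N' HQ HNN' x Hx. destruct (HQ x Hx) as [n [Hn Hr]]. exists n. split; auto; lia. }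
  assert (Hfa := fin_add d Lf sj N0 c e (fun j _ => Hsj j) HL).
  eapply Rle_trans; [apply Hfa|].
  - intros k Hk. apply HLf in Hk. destruct Hk; auto.
  - intros n j. unfold c, e. pose proof (Rmin_r (a n j) (b n j)). specialize (Hh n). lra.
  - intros k x Hk Hx. destruct (HN0 k Hk x) as [n [Hn [_ Ho]]].
    { intros j Hj. specialize (Hx j Hj). unfold lo, hi, kvec. lra. }
    exists n. split; auto. intros j Hj. specialize (Ho j Hj). lra.
  - assert (Hb0: forall n, 0 <= box_vol d (a n) (b n)).
    { intros n. apply prodd_nonneg. intros j Hj. specialize (Hab n j Hj). lra. }
    assert (Hs1 := sumL_seq_le_infsum _ s N0 Hb0 Hsum).
    assert (Hg: sumL (seq 0 N0) (fun n => eps * / 2 ^ (S n)) <= eps).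
    { rewrite sumL_scal, geom_sum. assert (0 < / 2 ^ N0) by (apply Rinv_0_lt_compat, pow_lt; lra). nra. }
    eapply Rle_trans; [| apply Rplus_le_compat; [apply Hs1 | apply Hg]].
    rewrite <- sumL_plus. apply sumL_le. intros n _.
    rewrite (prodd_ext d _ (fun j => (b n j - a n j) + h n)).
    eapply Rle_trans. apply (prod_up d (fun j => b n j - a n j) (An n) (h n)).
    + intros j Hj. pose proof (Hab n j Hj) as Habj. split. lra.
      apply (sumd_term_le d (fun j => b n j - a n j)); auto. intros; specialize (Hab n j0 H); lra.
    + specialize (Hh n); lra.
    + specialize (HhD n). unfold Dn in HhD. unfold box_vol. unfold Rdiv in HhD.
      rewrite Rmult_assoc. lra.
    + intros j Hj. unfold c, e. specialize (Hab n j Hj). rewrite Rmin_left by lra. field.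
Qed.


Lemma cover_ge0 d A s : cover_sum d A s -> 0 <= s.
Proof. intros [a [b [Hab [_ Hs]]]]. apply (infsum_ge0 (fun n => box_vol d (a n) (b n)) s); auto.
  intros n. apply prodd_nonneg. intros j Hj. specialize (Hab n j Hj). lra. Qed.

Lemma ball_cover d Rv : (1 <= d)%nat -> (forall j, (j < d)%nat -> 0 < Rv j) -> exists s, cover_sum d (ball2R d Rv) s.
Proof. intros Hd HR. eexists. apply (finite_cover d _ (((fun _ => -1), (fun _ => 1)) :: nil)); auto.
  - intros p [<-|[]] j Hj. simpl. lra.
  - intros x Hx. exists ((fun _ => -1), (fun _ => 1)). split. left; auto.
    intros j Hj. simpl. unfold ball2R in Hx.
    assert (rpow (Rabs (x j)) (2 * Rv j) <= 1).
    { eapply Rle_trans; [| apply Hx]. apply (sumd_term_le d (fun j => rpow (Rabs (x j)) (2 * Rv j))); auto.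
      intros; apply rpow_ge0, Rabs_pos. }
    specialize (HR j Hj). apply rpow_inv_le in H; [| lra | apply Rabs_pos | lra]. rewrite rpow_1l in H.
    pose proof (Rle_abs (x j)). pose proof (Rle_abs (- x j)). rewrite Rabs_Ropp in H1. lra. Qed.

Theorem mainTheorem9 :
  forall (d : nat) (Rv : nat -> R),
    (1 <= d)%nat ->
    (forall j, (j < d)%nat -> 0 < Rv j) ->
    forall m : nat, (1 <= m)%nat ->
    exists (vol : R) (C : nat),
      lebesgue_measure d (ball2R d Rv) vol /\
      has_card (latset d Rv m) C /\
      rpow (Rmax (INR m - bR d Rv) 0) (pR d Rv / gR d Rv) * vol <= INR C /\
      INR C <= rpow (INR m + bR d Rv) (pR d Rv / gR d Rv) * vol.
Proof.
  intros d Rv Hd HR m Hm.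
  destruct (lat_list d Rv m HR) as [Lf [HLn HLf]].
  set (E := fun w => forall s, cover_sum d (ball2R d Rv) s -> w <= s).
  destruct (ball_cover d Rv Hd HR) as [s0 Hs0].
  destruct (completeness E) as [v [Hv1 Hv2]].
  { exists s0. intros w Hw. apply Hw; auto. }
  { exists 0. intros s Hs. apply (cover_ge0 d _ s Hs). }
  assert (Hleb: lebesgue_measure d (ball2R d Rv) v).
  { split. intros s Hs. apply Hv2. intros w Hw. apply Hw; auto.
    intros w Hw. apply Hv1. auto. }
  exists v, (length Lf). split; auto. split.
  { exists Lf. split; auto. }
  set (e := pR d Rv / gR d Rv). set (b := bR d Rv).
  assert (Hb: 0 <= b) by apply bR_ge0.
  assert (HmR: 1 <= INR m) by (apply (le_INR 1); auto).
  split.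
  - destruct (Rle_lt_dec (INR m - b) 0) as [Hneg|Hpos].
    + rewrite Rmax_right by lra. rewrite rpow_0, Rmult_0_l. apply pos_INR.
    + rewrite Rmax_left by lra.
      assert (Hc := upper_cover d Rv m Lf (INR m - b) Hd HR HLf Hpos ltac:(unfold b; ring)).
      assert (Hv := proj1 Hleb _ Hc). fold e in Hv.
      assert (Hp: 0 < rpow (INR m - b) e) by (apply rpow_gt0; auto).
      apply Rmult_le_compat_l with (r := rpow (INR m - b) e) in Hv; [|lra].
      replace (rpow (INR m - b) e * (INR (length Lf) * / rpow (INR m - b) e)) with (INR (length Lf)) in Hv
        by (field; lra). lra.
  - assert (Hpos: 0 < INR m + b) by lra.
    assert (Hlow: INR (length Lf) * / rpow (INR m + b) e <= v).
    { apply (proj2 Hleb). intros s Hs. apply (lower_bound d Rv m Lf (INR m + b) s HR HLn HLf Hpos); auto. }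
    assert (Hp: 0 < rpow (INR m + b) e) by (apply rpow_gt0; auto).
    apply Rmult_le_compat_l with (r := rpow (INR m + b) e) in Hlow; [|lra].
    replace (rpow (INR m + b) e * (INR (length Lf) * / rpow (INR m + b) e)) with (INR (length Lf)) in Hlow
      by (field; lra). lra.
Qed.
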